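(* Let $r\ge 2$ and $m$ be integers with $0\le 2m\le r$, and put $n=2r-4m$. Let $\{x_0,\dots,x_r\}$ be the basis of $S^r(\mathbb{C}^2)$ and $\{w_0,\dots,w_n\}$ the basis of $S^n(\mathbb{C}^2)$ described in the context. Let $q_0$ be a bilinear form on $S^r(\mathbb{C}^2)$ such that for all $0\le i,j\le r$, $$0=(i+1)\,q_0(x_{i+1},x_j)+(j+1)\,q_0(x_i,x_{j+1}),\qquad (2r-2i-2j-n)\,q_0(x_i,x_j)=0 .$$ Then there exists a unique $\mathfrak{sl}_2(\mathbb{C})$-equivariant linear map $f:S^r(\mathbb{C}^2)\otimes S^r(\mathbb{C}^2)\to S^n(\mathbb{C}^2)$ whose component along $w_0$ is $q_0$, i.e. $f(u\otimes v)=\sum_{k=0}^n q_k(u,v)\,w_k$ for bilinear forms $q_k$ with $q_0$ the given one. Moreover, $f$ is symmetric if and only if $q_0$ is symmetric.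
   Context: $\mathfrak{sl}_2(\mathbb{C})$ has basis $X=\begin{pmatrix}0&1\\0&0\end{pmatrix}$, $H=\begin{pmatrix}1&0\\0&-1\end{pmatrix}$, $Y=\begin{pmatrix}0&0\\1&0\end{pmatrix}$, acting on the irreducible modules $S^d(\mathbb{C}^2)$ (binary forms of degree $d$). Let $x_0\in S^r(\mathbb{C}^2)$ be a highest weight vector and $x_i=Y^ix_0/i!$ for $0\le i\le r$; then $Yx_i=(i+1)x_{i+1}$, $Xx_i=(r-i+1)x_{i-1}$, $Hx_i=(r-2i)x_i$, with the convention $x_{-1}=x_{r+1}=0$ (and $x_l=0$ for $l\notin[0,r]$). Similarly $w_0\in S^n(\mathbb{C}^2)$ is a highest weight vector and $w_k=Y^kw_0/k!$, $0\le k\le n$. *)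

(* Defs.v *)
(* The scalar field C is taken to be R[i] for an arbitrary
   realType R (complete archimedean ordered field, i.e. R ~ the reals),
   so C ~ the complex numbers. *)
From mathcomp Require Import all_boot all_algebra.
From mathcomp Require Import reals complex.
Set Implicit Arguments. Unset Strict Implicit. Unset Printing Implicit Defensive.
Import GRing.Theory.
Local Open Scope ring_scope.

Section Sl2Defs.
Variable C : fieldType.

(* S^d(C^2) is represented by coordinate column vectors 'cV_(d.+1) in the
   basis x_0, ..., x_d (x_i = Y^i x_0 / i!). *)

(* basis vector x_i of S^d, with the convention x_l = 0 for l outside [0,d] *)
Definition xb (d i : nat) : 'cV[C]_(d.+1) :=
  if (i <= d)%N then delta_mx (inord i) 0 else 0.

Arguments xb d i : clear implicits.

(* An element A = [[a, b], [c, -a]] of sl_2 (2x2 matrix with trace 0) equals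
   b X + a H + c Y.  Its action on S^d in the basis x_i:
     X x_j = (d-j+1) x_{j-1},  H x_j = (d-2j) x_j,  Y x_j = (j+1) x_{j+1}.
   rho d A is the matrix of this action (column j = image of x_j). *)
Definition rho (d : nat) (A : 'M[C]_2) : 'M[C]_(d.+1) :=
  \matrix_(i < d.+1, j < d.+1)
    ((if (i.+1 == j :> nat) then A 0 1 * (d - j + 1)%:R else 0)
   + (if (i == j :> nat) then A 0 0 * ((d%:Z - 2 * j%:Z)%:~R) else 0)
   + (if (i == j.+1 :> nat) then A 1 0 * (j + 1)%:R else 0)).

Arguments rho d A : clear implicits.

Definition sl2 (A : 'M[C]_2) : bool := \tr A == 0.

(* S^r (x) S^r is identified with (r+1)x(r+1) matrices:
   T corresponds to sum_{i,j} T i j x_i (x) x_j, and u (x) v to u v^T.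
   A linear map f : S^r (x) S^r -> S^n is a matrix
   'M_(n.+1, r.+1 * r.+1) acting on mxvec-coordinates. *)
Definition tvec (r : nat) (T : 'M[C]_(r.+1)) : 'cV[C]_(r.+1 * r.+1) :=
  (mxvec T)^T.

Definition tens (r : nat) (u v : 'cV[C]_(r.+1)) : 'cV[C]_(r.+1 * r.+1) :=
  tvec (u *m v^T).

(* action of A on the tensor product: Z(u (x) v) = Zu (x) v + u (x) Zv *)
Definition rho_tens (r : nat) (A : 'M[C]_2) (T : 'M[C]_(r.+1)) : 'M[C]_(r.+1) :=
  rho r A *m T + T *m (rho r A)^T.

Arguments rho_tens r A T : clear implicits.

Definition equivariant (r n : nat) (f : 'M[C]_(n.+1, r.+1 * r.+1)) : Prop :=
  forall A : 'M[C]_2, sl2 A ->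
    forall T : 'M[C]_(r.+1), f *m tvec (rho_tens r A T) = rho n A *m (f *m tvec T).

Definition bform (r : nat) (Q : 'M[C]_(r.+1)) (u v : 'cV[C]_(r.+1)) : C :=
  (u^T *m Q *m v) 0 0.

(* k-th component q_k(u,v) of f(u (x) v) = sum_k q_k(u,v) w_k *)
Definition wcomp (r n : nat) (f : 'M[C]_(n.+1, r.+1 * r.+1)) (k : 'I_n.+1)
  (u v : 'cV[C]_(r.+1)) : C := (f *m tens u v) k 0.

Definition sym_map (r n : nat) (f : 'M[C]_(n.+1, r.+1 * r.+1)) : Prop :=
  forall u v : 'cV[C]_(r.+1), f *m tens u v = f *m tens v u.

Definition sym_form (r : nat) (Q : 'M[C]_(r.+1)) : Prop :=
  forall u v : 'cV[C]_(r.+1), bform Q u v = bform Q v u.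

End Sl2Defs.


Arguments xb {C} d i.
Arguments rho {C} d A.
Arguments rho_tens {C} r A T.
Arguments bform {C r} Q u v.
Arguments wcomp {C r n} f k u v.
Arguments equivariant {C r n} f.
Arguments sym_map {C r n} f.
Arguments sym_form {C r} Q.
Arguments tvec {C r} T.
Arguments tens {C r} u v.

(* Main.v *)
Require Import Defs.
From mathcomp Require Import all_boot all_algebra.
From mathcomp Require Import reals complex.
From mathcomp Require Import ring zify.
Set Implicit Arguments. Unset Strict Implicit. Unset Printing Implicit Defensive.
Import GRing.Theory Num.Theory.
Local Open Scope ring_scope.

Section Basics.
Variable C : numFieldType.

Lemma xbE d j (i : 'I_d.+1) :
  xb (C:=C) d j i 0 = if (j <= d)%N then (i == j :> nat)%:R else 0.
Proof.
rewrite /xb; case: ifP => hj; last by rewrite mxE.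
rewrite mxE eqxx andbT.
suff -> : (i == inord j) = (i == j :> nat) by [].
apply/idP/idP => /eqP h; apply/eqP.
  by rewrite h inordK.
by apply/val_inj; rewrite /= inordK.
Qed.

Lemma mul_xbE d (M : 'M[C]_(d.+1)) j i :
  (M *m xb d j) i 0 = if (j <= d)%N then M i (inord j) else 0.
Proof.
rewrite /xb; case: ifP => hj; last by rewrite mulmx0 mxE.
by rewrite -colE mxE.
Qed.

Lemma trmul_xbE d (M : 'M[C]_(d.+1)) j i :
  (M^T *m xb d j) i 0 = if (j <= d)%N then M (inord j) i else 0.
Proof. by rewrite mul_xbE mxE. Qed.

Lemma mx_xbP d (M N : 'M[C]_(d.+1)) :
  (forall j, (j <= d)%N -> M *m xb d j = N *m xb d j) -> M = N.
Proof.
move=> H; apply/matrixP => i j.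
have := H j (ltn_ord j); move/matrixP/(_ i 0).
by rewrite !mul_xbE -ltnS ltn_ord inord_val.
Qed.

Definition Xm : 'M[C]_2 := delta_mx 0 1.
Definition Hm : 'M[C]_2 := delta_mx 0 0 - delta_mx 1 1.
Definition Ym : 'M[C]_2 := delta_mx 1 0.

Lemma sl2X : sl2 Xm.
Proof. by rewrite /sl2 /Xm /mxtrace !big_ord_recl big_ord0 !mxE /= !addr0. Qed.
Lemma sl2H : sl2 Hm.
Proof. by rewrite /sl2 /Hm /mxtrace !big_ord_recl big_ord0 !mxE /= subr0 addr0 add0r subrr. Qed.
Lemma sl2Y : sl2 Ym.
Proof. by rewrite /sl2 /Ym /mxtrace !big_ord_recl big_ord0 !mxE /= !addr0. Qed.

Lemma rho_dec d (A : 'M[C]_2) :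
  rho d A = A 0 1 *: rho d Xm + A 0 0 *: rho d Hm + A 1 0 *: rho d Ym.
Proof.
apply/matrixP => i j; rewrite !mxE /Xm /Hm /Ym ?mxE /= !subr0 !mul1r !mul0r.
by case: (i.+1 == j :> nat); case: (i == j :> nat); case: (i == j.+1 :> nat);
  rewrite /= ?mulr0 ?addr0 ?add0r; ring.
Qed.


Lemma XmE : (Xm 0 1 = 1) * (Xm 0 0 = 0) * (Xm 1 0 = 0).
Proof. by split; [split|]; rewrite /Xm !mxE. Qed.
Lemma HmE : (Hm 0 1 = 0) * (Hm 0 0 = 1) * (Hm 1 0 = 0).
Proof. by split; [split|]; rewrite /Hm !mxE /= ?subr0 ?subrr. Qed.
Lemma YmE : (Ym 0 1 = 0) * (Ym 0 0 = 0) * (Ym 1 0 = 1).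
Proof. by split; [split|]; rewrite /Ym !mxE. Qed.

Lemma acolX d j : rho d Xm *m xb d j.+1 = (d - j)%:R *: xb (C:=C) d j.
Proof.
apply/matrixP => i k; rewrite (ord1 k) mul_xbE !mxE xbE /= ?oppr0 ?subr0 ?mulr0n ?mulr1n ?mul0r ?oppr0 ?mul0r ?mul1r ?if_same ?addr0.
case: (ltnP j d) => hj.
  rewrite (ltnW hj) inordK // eqSS.
  case: (i == j :> nat) => /=; rewrite ?mul0r ?mulr0 ?addr0 ?add0r ?mul1r ?mulr1 //.
  by have -> : (d - j.+1 + 1 = d - j)%N by lia.
case: ifP => hj2; rewrite ?mulr0 //.
have -> : (d - j = 0)%N by lia.
by rewrite mul0r.
Qed.

Lemma intrHE d j : ((d%:Z - 2 * j%:Z)%:~R : C) = d%:R - 2 * j%:R.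
Proof. by rewrite intrB intrM. Qed.

Ltac simp0 := rewrite /= ?oppr0 ?subr0 ?mulr0n ?mulr1n ?mul0r ?oppr0 ?mul0r ?mul1r ?mulr0 ?mulr1 ?if_same ?addr0 ?add0r.

Lemma acolX0 d : rho d Xm *m xb (C:=C) d 0 = 0.
Proof.
apply/matrixP => i k; rewrite (ord1 k) mul_xbE !mxE /=; simp0.
by rewrite inordK.
Qed.

Lemma acolH d j : rho d Hm *m xb d j = (d%:R - 2 * j%:R) *: xb (C:=C) d j.
Proof.
apply/matrixP => i k; rewrite (ord1 k) mul_xbE !mxE xbE /=; simp0.
case: ifP => hj; simp0; last done.
rewrite inordK //; simp0.
by case: (i == j :> nat); simp0; rewrite ?intrHE.
Qed.

Lemma acolY d j : rho d Ym *m xb d j = (j + 1)%:R *: xb (C:=C) d j.+1.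
Proof.
apply/matrixP => i k; rewrite (ord1 k) mul_xbE !mxE xbE /=; simp0.
case: ifP => hj; simp0; last first.
  rewrite (_ : (j < d)%N = false); simp0; first done. lia.
rewrite inordK //.
case: (ltnP j d) => hj2; simp0.
  by case: (i == j.+1 :> nat); simp0.
by rewrite ifN //; apply/eqP => h; have := ltn_ord i; lia.
Qed.

Lemma arowX d j : (rho d Xm)^T *m xb d j = (d - j)%:R *: xb (C:=C) d j.+1.
Proof.
apply/matrixP => i k; rewrite (ord1 k) trmul_xbE !mxE xbE /=; simp0.
case: ifP => hj; simp0; last first.
  rewrite (_ : (j < d)%N = false); simp0; first done. lia.
rewrite inordK //.
case: (ltnP j d) => hj2.
  case: (j.+1 == i :> nat) /eqP => h; simp0.
    by rewrite -h eqxx; simp0; congr (_%:R); lia.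
  rewrite (_ : (i == j.+1 :> nat) = false); simp0; first done.
  by apply/eqP => h'; apply: h; rewrite h'.
have -> : (d - j = 0)%N by lia.
simp0; rewrite ifN //; apply/eqP => h; have := ltn_ord i; lia.
Qed.

Lemma arowH d j : (rho d Hm)^T *m xb d j = (d%:R - 2 * j%:R) *: xb (C:=C) d j.
Proof.
apply/matrixP => i k; rewrite (ord1 k) trmul_xbE !mxE xbE /=; simp0.
case: ifP => hj; simp0; last done.
rewrite inordK // ?subr0; simp0.
case: (i == j :> nat) /eqP => [h|h]; simp0.
  rewrite eq_sym; move/eqP: h => h; rewrite h /=; simp0. by rewrite -(eqP h) intrHE.
by rewrite eq_sym; case: eqP => // h'; case: h; rewrite h'.
Qed.

Lemma arowY d j : (j < d)%N -> (rho d Ym)^T *m xb d j.+1 = (j + 1)%:R *: xb (C:=C) d j.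
Proof.
move=> hjd; apply/matrixP => i k; rewrite (ord1 k) trmul_xbE !mxE xbE /=; simp0.
case: (ltnP j d) => hj; simp0.
  rewrite (ltnW hj) inordK // eqSS.
  case: (j == i :> nat) /eqP => h; simp0.
    by rewrite h eqxx; simp0.
  rewrite (_ : (i == j :> nat) = false); simp0; first done.
  by apply/eqP => h'; apply: h; rewrite h'.
by lia.
Qed.

Lemma arowY0 d : (rho d Ym)^T *m xb (C:=C) d 0 = 0.
Proof.
apply/matrixP => i k; rewrite (ord1 k) trmul_xbE !mxE /=; simp0.
by rewrite inordK.
Qed.

Lemma rXY d : rho d Xm *m rho d Ym - rho d Ym *m rho d Xm = rho (C:=C) d Hm.
Proof.
apply: mx_xbP => j hj; rewrite mulmxBl -!mulmxA acolY acolH -scalemxAr acolX.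
case: j hj => [|j] hj.
  by rewrite acolX0 mulmx0 subr0 scalerA subn0 add0n mul1r mulr0 subr0.
rewrite (acolX d j) -scalemxAr acolY !scalerA -scalerBl; congr (_ *: _).
rewrite natrB; last by lia.
rewrite natrB; last by lia.
rewrite -[j.+1]addn1 !natrD; ring.
Qed.

Lemma rHX d : rho d Hm *m rho d Xm - rho d Xm *m rho d Hm = 2%:R *: rho (C:=C) d Xm.
Proof.
apply: mx_xbP => j hj; rewrite mulmxBl -!mulmxA acolH -scalemxAr -scalemxAl.
case: j hj => [|j] hj.
  by rewrite !acolX0 mulmx0 !scaler0 subrr.
rewrite !acolX -scalemxAr acolH !scalerA -scalerBl; congr (_ *: _).
rewrite -[j.+1]addn1 !natrD; ring.
Qed.

End Basics.
Arguments Xm {C}.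
Arguments Hm {C}.
Arguments Ym {C}.

Lemma zmod6 (V : zmodType) (a b c d e f : V) :
  a + b + (c + d) - (e + c + (b + f)) = a - e + (d - f).
Proof.
rewrite [c + d]addrC [e + c]addrC [a + b + _]addrACA [c + e + _]addrACA [c + b]addrC addrKA.
by rewrite [RHS]addrACA opprD.
Qed.

Section Tensor.
Variable C : numFieldType.
Variable r : nat.
Local Notation N := (r.+1 * r.+1)%N.

Definition Dop (P : 'M[C]_(r.+1)) : 'M[C]_N := (lin_mulmx P + lin_mulmxr P^T)^T.

Lemma tvecD (A B : 'M[C]_(r.+1)) : tvec (A + B) = tvec A + tvec B.
Proof. by rewrite /tvec linearD /= linearD. Qed.
Lemma tvecB (A B : 'M[C]_(r.+1)) : tvec (A - B) = tvec A - tvec B.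
Proof. by rewrite /tvec linearB /= linearB. Qed.
Lemma tvecZ a (A : 'M[C]_(r.+1)) : tvec (a *: A) = a *: tvec A.
Proof. by rewrite /tvec linearZ /= linearZ. Qed.

Lemma Dop_tvec P T : Dop P *m tvec T = tvec (P *m T + T *m P^T).
Proof.
rewrite /Dop /tvec -trmx_mul mulmxDr /lin_mulmx /lin_mulmxr !mul_vec_lin /=.
by rewrite [mxvec (_ + _)]linearD.
Qed.

Lemma Dop_tens P (u v : 'cV[C]_(r.+1)) :
  Dop P *m tens u v = tens (P *m u) v + tens u (P *m v).
Proof.
by rewrite /tens Dop_tvec -tvecD trmx_mul !mulmxA.
Qed.

Lemma tensZl a (u v : 'cV[C]_(r.+1)) : tens (a *: u) v = a *: tens u v.
Proof. by rewrite /tens -tvecZ scalemxAl. Qed.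
Lemma tensZr a (u v : 'cV[C]_(r.+1)) : tens u (a *: v) = a *: tens u v.
Proof. by rewrite /tens -tvecZ linearZ /= scalemxAr. Qed.
Lemma tens0l (v : 'cV[C]_(r.+1)) : tens 0 v = 0.
Proof. by rewrite /tens mul0mx /tvec linear0 /= linear0. Qed.
Lemma tens0r (u : 'cV[C]_(r.+1)) : tens u 0 = 0.
Proof. by rewrite /tens linear0 mulmx0 /tvec linear0 /= linear0. Qed.

Lemma spanN p (M M' : 'M[C]_(p, N)) :
  (forall a b, (a <= r)%N -> (b <= r)%N ->
     M *m tens (xb r a) (xb r b) = M' *m tens (xb r a) (xb r b)) -> M = M'.
Proof.
move=> H; apply/matrixP => i k; case/mxvec_indexP: k => a b.
have ha : (a <= r)%N := ltn_ord a.
have hb : (b <= r)%N := ltn_ord b.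
have := H a b ha hb.
rewrite /tens /xb ha hb !inord_val trmx_delta mul_delta_mx /tvec mxvec_delta trmx_delta.
by rewrite -!colE => /matrixP/(_ i 0); rewrite !mxE.
Qed.

Lemma tvecP p (M M' : 'M[C]_(p, N)) :
  (forall T, M *m tvec T = M' *m tvec T) -> M = M'.
Proof. by move=> H; apply: spanN => a b _ _; apply: H. Qed.

Lemma DopD P Q : Dop (P + Q) = Dop P + Dop Q.
Proof.
apply: tvecP => T; rewrite mulmxDl !Dop_tvec -tvecD; congr tvec.
by rewrite linearD /= mulmxDl mulmxDr addrACA.
Qed.
Lemma DopZ a P : Dop (a *: P) = a *: Dop P.
Proof.
apply: tvecP => T; rewrite -scalemxAl !Dop_tvec -tvecZ; congr tvec.
by rewrite linearZ /= -scalemxAl -scalemxAr scalerDr.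
Qed.
Lemma DopB P Q : Dop (P - Q) = Dop P - Dop Q.
Proof.
apply: tvecP => T; rewrite mulmxBl !Dop_tvec -tvecB; congr tvec.
by rewrite linearB /= mulmxBl mulmxBr opprD addrACA.
Qed.

Lemma Dop_comm P Q :
  Dop P *m Dop Q - Dop Q *m Dop P = Dop (P *m Q - Q *m P).
Proof.
apply: tvecP => T; rewrite mulmxBl -!mulmxA !Dop_tvec -tvecB; congr tvec.
rewrite !mulmxDr !mulmxDl !mulmxA linearB /= !trmx_mul mulNmx mulmxBr !mulmxA.
exact: zmod6.
Qed.

End Tensor.

Section Main.
Variables (C : numFieldType) (r n : nat) (Q0 : 'M[C]_(r.+1)).
Hypothesis hn : (n <= 2 * r)%N.
Hypothesis h1 : forall i j : nat, (i <= r)%N -> (j <= r)%N ->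
     0 = (i + 1)%:R * bform Q0 (xb r i.+1) (xb r j)
         + (j + 1)%:R * bform Q0 (xb r i) (xb r j.+1).
Hypothesis h2 : forall i j : nat, (i <= r)%N -> (j <= r)%N ->
     ((2 * r%:Z - 2 * i%:Z - 2 * j%:Z - n%:Z)%:~R : C)
       * bform Q0 (xb r i) (xb r j) = 0.

Local Notation N := (r.+1 * r.+1)%N.
Local Notation Xop := (Dop (rho r (@Xm C))).
Local Notation Hop := (Dop (rho r (@Hm C))).
Local Notation Yop := (Dop (rho r (@Ym C))).

Definition q0 : 'rV[C]_N := mxvec Q0.

Lemma qt (u v : 'cV[C]_(r.+1)) : q0 *m tens u v = u^T *m Q0 *m v.
Proof.
rewrite /q0 /tens /tvec -[mxvec Q0]trmxK -trmx_mul.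
have := mxvec_dotmul Q0 u^T v^T; rewrite !trmxK => ->.
by apply/matrixP => i j; rewrite !ord1 mxE.
Qed.

Lemma qtE (u v : 'cV[C]_(r.+1)) : (q0 *m tens u v) 0 0 = bform Q0 u v.
Proof. by rewrite qt. Qed.

Lemma e11 (a b : C) (A B : 'M[C]_1) : (a *: A + b *: B) 0 0 = a * A 0 0 + b * B 0 0.
Proof. by rewrite !mxE. Qed.

Lemma q0Y : q0 *m Yop = 0.
Proof.
apply: spanN => a b ha hb.
rewrite -mulmxA Dop_tens !acolY tensZl tensZr mulmxDr -!scalemxAr mul0mx.
apply/matrixP => i j; rewrite !ord1 e11 !qtE [RHS]mxE.
by rewrite -h1.
Qed.

Lemma q0H : q0 *m Hop = n%:R *: q0.
Proof.
apply: spanN => a b ha hb.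
rewrite -mulmxA Dop_tens !acolH tensZl tensZr mulmxDr -!scalemxAr -scalemxAl.
apply/matrixP => i j; rewrite !ord1 e11 [RHS]mxE !qtE.
have := h2 ha hb; rewrite !intrB !intrM.
set B := bform _ _ _ => E.
have : (r%:R - 2 * a%:R) * B + (r%:R - 2 * b%:R) * B - n%:R * B
   = (2 * r%:R - 2 * a%:R - 2 * b%:R - n%:R) * B by ring.
by rewrite E => /eqP; rewrite subr_eq0 => /eqP.
Qed.

Lemma opXY : Xop *m Yop = Yop *m Xop + Hop.
Proof. by rewrite -(@rXY C r) -Dop_comm addrC subrK. Qed.

Lemma opXH : Xop *m Hop = Hop *m Xop - 2%:R *: Xop.
Proof. by rewrite -DopZ -(@rHX C r) -Dop_comm opprB addrC subrK. Qed.

Fixpoint phi k : 'rV[C]_N := if k is k'.+1 then phi k' *m Xop else q0.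

Lemma phiH k : phi k *m Hop = (n%:R - 2 * k%:R) *: phi k.
Proof.
elim: k => [|k IH] /=; first by rewrite q0H mulr0 subr0.
rewrite -mulmxA opXH mulmxBr mulmxA IH -scalemxAl -scalemxAr -scalerBl.
congr (_ *: _); rewrite -[k.+1]addn1 natrD; ring.
Qed.

Lemma phiY0 : phi 0 *m Yop = 0.
Proof. exact: q0Y. Qed.

Lemma phiY k : phi k.+1 *m Yop = ((k.+1)%:R * (n%:R - k%:R)) *: phi k.
Proof.
elim: k => [|k IH].
  by rewrite /= -mulmxA opXY mulmxDr mulmxA q0Y mul0mx add0r q0H mul1r subr0.
rewrite [phi k.+2]/= -mulmxA opXY mulmxDr mulmxA IH -[phi k *m Xop]/(phi k.+1) phiH -scalemxAl.
rewrite -scalerDl; congr (_ *: _).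
rewrite -[k.+1]addn1 !natrD; ring.
Qed.

Definition K := (2 * r + 1)%N.

Lemma phiK : phi K = 0.
Proof.
apply: spanN => a b ha hb; rewrite mul0mx.
have E := phiH K.
have := congr1 (fun M => M *m tens (xb r a) (xb r b)) E.
rewrite /= -mulmxA Dop_tens !acolH tensZl tensZr mulmxDr -!scalemxAr -scalemxAl.
rewrite -scalerDl => /eqP; rewrite -subr_eq0 -scalerBl => /eqP.
move/matrixP=> H; apply/matrixP => i j; rewrite !ord1 mxE.
move: (H 0 0); rewrite !mxE => /eqP; rewrite mulf_eq0 => /orP [|/eqP //].
rewrite (_ : _ - _ = (6 * r + 2)%:R - (n + 2 * a + 2 * b)%:R); last first.
  by rewrite /K !natrD ?natrM; ring.
by rewrite subr_eq0 eqr_nat => /eqP; lia.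
Qed.

Lemma phi_add k j : phi k = 0 -> phi (k + j) = 0.
Proof. by move=> h; elim: j => [|j IH]; rewrite ?addn0 // addnS /= IH mul0mx. Qed.

Lemma phi_hi k : (n < k)%N -> phi k = 0.
Proof.
suff H : forall t k, (n < k)%N -> (K <= k + t)%N -> phi k = 0.
  by move=> hk; apply: (H K) => //; rewrite leq_addl.
elim => [|t IH] {}k hk hK.
  rewrite addn0 in hK; by rewrite -(subnKC hK) phi_add ?phiK.
have := phiY k; rewrite (IH k.+1); [|lia|lia].
rewrite mul0mx => /esym/eqP; rewrite scaler_eq0 => /orP [|/eqP //].
rewrite mulf_eq0 pnatr_eq0 /= subr_eq0 eqr_nat => /eqP h; exfalso; lia.
Qed.

Definition cc k : C := (n ^_ k)%:R.

Lemma cc_neq0 k : (k <= n)%N -> cc k != 0.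
Proof. by move=> hk; rewrite /cc pnatr_eq0 -lt0n ffact_gt0. Qed.

Lemma ccS k : cc k.+1 = cc k * (n - k)%:R.
Proof. by rewrite /cc ffactnSr natrM. Qed.

Definition f0 : 'M[C]_(n.+1, N) := \matrix_(k < n.+1) ((cc k)^-1 *: phi k).

Lemma rowf0 (k : 'I_n.+1) : row k f0 = (cc k)^-1 *: phi k.
Proof. by rewrite rowK. Qed.

Lemma rowxb d p (M : 'M[(C : fieldType)]_(d.+1, p)) k :
  (xb d k)^T *m M = if (k <= d)%N then row (inord k) M else 0.
Proof.
rewrite /xb; case: ifP => _; first by rewrite trmx_delta -rowE.
by rewrite linear0 mul0mx.
Qed.

Lemma rowA_mul p (A : 'M[(C : fieldType)]_(n.+1)) (M : 'M[(C : fieldType)]_(n.+1, p)) (k : 'I_n.+1) :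
  row k (A *m M) = (A^T *m xb n k)^T *m M.
Proof.
by rewrite trmx_mul trmxK -mulmxA rowxb -ltnS ltn_ord inord_val row_mul.
Qed.

Lemma trZ m p (a : C) (A : 'M[(C : fieldType)]_(m, p)) : (a *: A)^T = a *: A^T.
Proof. exact: linearZ. Qed.

Lemma mrowX k : (rho n Xm)^T *m xb n k = (n - k)%:R *: xb (C:=C) n k.+1.
Proof. exact: arowX. Qed.
Lemma mrowH k : (rho n Hm)^T *m xb n k = (n%:R - 2 * k%:R) *: xb (C:=C) n k.
Proof. exact: arowH. Qed.
Lemma mrowY k : (k < n)%N -> (rho n Ym)^T *m xb n k.+1 = (k + 1)%:R *: xb (C:=C) n k.
Proof. exact: arowY. Qed.
Lemma mrowY0 : (rho n Ym)^T *m xb (C:=C) n 0 = 0.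
Proof. exact: arowY0. Qed.

Lemma rowgX (g : 'M[C]_(n.+1, N)) (hg : g *m Xop = rho n Xm *m g) k :
  (k < n)%N -> row (inord k) g *m Xop = (n - k)%:R *: row (inord k.+1) g.
Proof.
move=> hk; rewrite -row_mul hg rowA_mul inordK; last by lia.
rewrite mrowX.
rewrite trZ.
by rewrite -scalemxAl rowxb hk.
Qed.

Lemma f0X : f0 *m Xop = rho n Xm *m f0.
Proof.
apply/row_matrixP => k; rewrite row_mul rowf0 -scalemxAl rowA_mul mrowX trZ.
rewrite -scalemxAl rowxb; case: ifP => hk.
  rewrite rowf0 inordK // scalerA; congr (_ *: _).
  have h1' := cc_neq0 (ltnW hk).
  have h2' : (n - k)%:R != 0 :> C by rewrite pnatr_eq0; lia.
  rewrite ccS; field; by rewrite h1' h2'.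
rewrite scaler0 -[phi k *m Xop]/(phi k.+1) phi_hi ?scaler0 //.
by have := ltn_ord k; lia.
Qed.

Lemma f0H : f0 *m Hop = rho n Hm *m f0.
Proof.
apply/row_matrixP => k; rewrite row_mul rowf0 -scalemxAl phiH rowA_mul mrowH trZ.
have hk : (k <= n)%N := ltn_ord k.
by rewrite -scalemxAl rowxb hk inord_val rowf0 !scalerA mulrC.
Qed.

Lemma f0Y : f0 *m Yop = rho n Ym *m f0.
Proof.
apply/row_matrixP => k; rewrite row_mul rowf0 -scalemxAl rowA_mul.
case: k => [[|k] hk] /=.
  by rewrite phiY0 mrowY0 trmx0 mul0mx scaler0.
rewrite -[phi k *m Xop]/(phi k.+1) phiY mrowY; last by lia.
rewrite trZ -scalemxAl rowxb (_ : (k <= n)%N); last by lia.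
rewrite rowf0 inordK; last by lia.
rewrite !scalerA; congr (_ *: _).
have h1' : cc k != 0 by apply: cc_neq0; lia.
have h2' : (n - k)%:R != 0 :> C by rewrite pnatr_eq0; lia.
rewrite ccS; rewrite natrB; last by lia.
rewrite natrB in h2'; last by lia.
field; by rewrite h1' h2'.
Qed.

Lemma f0_op A : f0 *m Dop (rho r A) = rho n A *m f0.
Proof.
rewrite (rho_dec r A) (rho_dec n A) !DopD !DopZ !mulmxDr !mulmxDl.
by rewrite -!scalemxAr -!scalemxAl f0X f0H f0Y.
Qed.

Lemma f0_equiv : equivariant f0.
Proof.
move=> A _ T; rewrite /rho_tens.
transitivity (f0 *m (Dop (rho r A) *m tvec T)); first exact: (congr1 (mulmx f0) (esym (Dop_tvec _ _))).
by rewrite mulmxA f0_op mulmxA.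
Qed.

Lemma wcomp_row0 p (g : 'M[C]_(p.+1, N)) u v :
  wcomp g ord0 u v = (row ord0 g *m tens u v) 0 0.
Proof. by rewrite /wcomp -row_mul [RHS]mxE. Qed.

Lemma row0 : row ord0 f0 = q0.
Proof. by rewrite rowf0 /cc /= invr1 scale1r. Qed.

Lemma f0_wcomp u v : wcomp f0 ord0 u v = bform Q0 u v.
Proof. by rewrite wcomp_row0 row0 qtE. Qed.

Lemma f0_uniq g : equivariant g ->
  (forall u v, wcomp g ord0 u v = bform Q0 u v) -> g = f0.
Proof.
move=> he hw.
have hg : g *m Xop = rho n Xm *m g.
  apply: tvecP => T; rewrite -mulmxA Dop_tvec -mulmxA.
  exact: (he _ (@sl2X C) T).
have h0 : row ord0 g = q0.
  apply: spanN => a b _ _; apply/matrixP => i j.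
  by rewrite !ord1 -wcomp_row0 hw qtE.
suff H : forall k, (k <= n)%N -> row (inord k) g = (cc k)^-1 *: phi k.
  apply/row_matrixP => k; rewrite rowf0; have := H k (ltn_ord k).
  by rewrite inord_val.
elim => [|k IH] hk.
  rewrite (_ : inord 0 = ord0); last by apply: val_inj; rewrite /= inordK.
  by rewrite h0 /cc /= invr1 scale1r.
have E := rowgX hg hk; rewrite IH ?(ltnW hk) // in E.
have hnz : (n - k)%:R != 0 :> C by rewrite pnatr_eq0; lia.
rewrite -[row (inord k.+1) g]scale1r -(mulVf hnz) -scalerA -E -scalemxAl scalerA.
congr (_ *: _); rewrite ccS.
have h1' : cc k != 0 by apply: cc_neq0; lia.
field; by rewrite h1' hnz.
Qed.

Lemma phi_sym (hQ : sym_form Q0) k u v :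
  phi k *m tens u v = phi k *m tens v u.
Proof.
elim: k u v => [|k IH] u v /=.
  by apply/matrixP => i j; rewrite !ord1 !qtE; exact: hQ.
rewrite -!mulmxA !Dop_tens !mulmxDr IH [X in _ + X = _]IH addrC.
by [].
Qed.

Lemma f0_sym : sym_form Q0 -> sym_map f0.
Proof.
move=> hQ u v; apply/row_matrixP => k.
by rewrite !row_mul rowf0 -!scalemxAl phi_sym.
Qed.

Lemma main_sec :
  (exists! f : 'M[C]_(n.+1, N),
     equivariant f /\ forall u v, wcomp f ord0 u v = bform Q0 u v) /\
  (forall f : 'M[C]_(n.+1, N),
     equivariant f -> (forall u v, wcomp f ord0 u v = bform Q0 u v) ->
     (sym_map f <-> sym_form Q0)).
Proof.
split.
  exists f0; split; first by split; [exact: f0_equiv | exact: f0_wcomp].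
  by move=> g [he hw]; rewrite (f0_uniq he hw).
move=> f he hw; rewrite (f0_uniq he hw); split; last exact: f0_sym.
by move=> hs u v; rewrite -!f0_wcomp /wcomp hs.
Qed.

End Main.

Unset Implicit Arguments.
Set Strict Implicit.
Theorem mainTheorem1 (R : realType) (r m : nat) (Q0 : 'M[R[i]]_(r.+1)) :
  (2 <= r)%N -> (2 * m <= r)%N ->
  let n := (2 * r - 4 * m)%N in
  (forall i j : nat, (i <= r)%N -> (j <= r)%N ->
     0 = (i + 1)%:R * bform Q0 (xb r i.+1) (xb r j)
         + (j + 1)%:R * bform Q0 (xb r i) (xb r j.+1)) ->
  (forall i j : nat, (i <= r)%N -> (j <= r)%N ->
     ((2 * r%:Z - 2 * i%:Z - 2 * j%:Z - n%:Z)%:~R : R[i])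
       * bform Q0 (xb r i) (xb r j) = 0) ->
  (exists! f : 'M[R[i]]_(n.+1, r.+1 * r.+1),
     equivariant f /\ forall u v, wcomp f ord0 u v = bform Q0 u v) /\
  (forall f : 'M[R[i]]_(n.+1, r.+1 * r.+1),
     equivariant f -> (forall u v, wcomp f ord0 u v = bform Q0 u v) ->
     (sym_map f <-> sym_form Q0)).
Proof.
move=> hr hm n h1 h2.
have hn : (n <= 2 * r)%N by rewrite /n; lia.
exact: (@main_sec R[i] r n Q0 hn h1 h2).
Qed.
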